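(* Let $1 \le r \le n/2$ be integers and let $A$ be the adjacency matrix of the subgraph of the Hamming cube $\{0,1\}^n$ induced by $S(n,r-1)\cup S(n,r)$. Then: (i) For each $0 \le t \le r-1$, $A$ has a pair of eigenvalues $\pm\gamma_t$, where $\gamma_t = \sqrt{(r-t)(n-r-t+1)}$, each of multiplicity $\binom{n}{t}-\binom{n}{t-1}$ (with $\binom{n}{-1}:=0$). In addition $A$ has eigenvalue $0$ with multiplicity $\binom{n}{r}-\binom{n}{r-1}$. (ii) Given $0\le t\le r-1$ and $\lambda\in\{-\gamma_t,\gamma_t\}$, the eigenspace $W_t(\lambda)$ of $A$ corresponding to this pair $(t,\lambda)$ is described as follows: for $f \in W_t(\lambda)$ with restrictions $f_{r-1}, f_r$ to $S(n,r-1)$ and $S(n,r)$, the function $f_{r-1}$ can be chosen arbitrarily in the $t$-th eigenspace $V_t$ of $S(n,r-1)$, in which case $f_r$ is determined by $f_r(x) = \frac{1}{\lambda}\sum_{|y|=r-1,\ y\subset x} f_{r-1}(y)$; furthermore $f_r$ lies in the $t$-th eigenspace $V_t$ of $S(n,r)$. (iii) The eigenspace $W(0)$ corresponding to the eigenvalue $0$ contains the functions which vanish on $S(n,r-1)$ and whose restriction to $S(n,r)$ lies in the $r$-th eigenspace $V_r$ of $S(n,r)$.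
   Context: $\{0,1\}^n$ is the Hamming cube (vertices adjacent iff Hamming distance $1$); points are identified with subsets of $\{1,\dots,n\}$, and $|x|$ is the weight. $S(n,i)=\{x:|x|=i\}$ with inner product $\langle f,g\rangle=\sum_{x\in S(n,i)}f(x)g(x)$. For $|z|\le i$, $g_z$ on $S(n,i)$ is $1$ at $x$ if $z\subseteq x$ and $0$ otherwise; $U_j=\mathrm{span}\{g_z:|z|\le j\}$; the eigenspaces of $S(n,i)$ are $V_0=U_0$ (constants) and $V_j=U_j\cap U_{j-1}^\perp$ for $1\le j\le i$. *)

(* Defs.v *)
From HB Require Import structures.
From mathcomp Require Import all_boot all_order all_algebra.
Set Implicit Arguments. Unset Strict Implicit. Unset Printing Implicit Defensive.
Import Order.TTheory GRing.Theory Num.Theory.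
Local Open Scope ring_scope.

(* Points of {0,1}^n are subsets of 'I_n; weight = cardinality. *)

Definition hadj n (x y : {set 'I_n}) : bool :=
  #|(x :\: y) :|: (y :\: x)| == 1%N.

Definition layers (n r : nat) : {set {set 'I_n}} :=
  [set x : {set 'I_n} | (#|x| == r.-1) || (#|x| == r)].

Definition adjmx (R : nzRingType) n r : 'M[R]_#|layers n r| :=
  \matrix_(i, j) (hadj (enum_val i) (enum_val j))%:R.

(* A (row) vector seen as a function on {0,1}^n (zero outside the layers). *)
Definition vfun (R : nzRingType) n r (v : 'rV[R]_#|layers n r|)
  (x : {set 'I_n}) : R :=
  \sum_(i < #|layers n r|) (if enum_val i == x then v 0 i else 0).

Definition restr (R : nzRingType) n r (v : 'rV[R]_#|layers n r|) (k : nat)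
  (x : {set 'I_n}) : R :=
  if #|x| == k then vfun v x else 0.

Definition sdot (R : nzRingType) n (i : nat) (f g : {set 'I_n} -> R) : R :=
  \sum_(x : {set 'I_n} | #|x| == i) f x * g x.

Definition gz (R : nzRingType) (n : nat) (z x : {set 'I_n}) : R := (z \subset x)%:R.

Arguments gz R {n} z x.

(* h (viewed on S(n,i)) lies in U_j = span{g_z : |z| <= j} (with |z| <= i). *)
Definition inU (R : nzRingType) n (i j : nat) (h : {set 'I_n} -> R) : Prop :=
  exists c : {set 'I_n} -> R, forall x : {set 'I_n}, #|x| = i ->
    h x = \sum_(z : {set 'I_n} | (#|z| <= j)%N && (#|z| <= i)%N) c z * gz R z x.

(* h lies in the j-th eigenspace V_j of S(n,i):
   V_0 = U_0, V_j = U_j \cap U_{j-1}^perp. *)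
Definition inV (R : nzRingType) n (i j : nat) (h : {set 'I_n} -> R) : Prop :=
  inU i j h /\
  (if j is j'.+1 then forall h' : {set 'I_n} -> R, inU i j' h' -> sdot i h h' = 0
   else True).

Definition mult n t : nat :=
  ('C(n, t) - (if t is t'.+1 then 'C(n, t') else 0))%N.

(* Main.v *)
Require Import Defs.
From HB Require Import structures.
From mathcomp Require Import all_boot all_order all_algebra.
From mathcomp Require Import ring lra zify.
Set Implicit Arguments. Unset Strict Implicit. Unset Printing Implicit Defensive.
Import Order.TTheory GRing.Theory Num.Theory.
Local Open Scope ring_scope.

Section Ops.
Variable R : rcfType.
Variable n : nat.
Implicit Types (x y z w : {set 'I_n}) (f g h : {set 'I_n} -> R).

Definition Up f x : R := \sum_(b in x) f (x :\ b).
Definition Dn f y : R := \sum_(a | a \notin y) f (a |: y).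
Definition Kr y x : R := ((y \subset x) && (#|y|.+1 == #|x|))%:R.
Definition dlt y : {set 'I_n} -> R := fun w => (w == y)%:R.



Lemma imD1 x y : (y \in [set x :\ c | c in x]) = (y \subset x) && (#|y|.+1 == #|x|).
Proof.
apply/imsetP/andP.
  case=> b hb ->; split; first exact: subD1set.
  by rewrite (cardsD1 b x) hb add1n.
case=> sub /eqP cd.
have c1 : #|x :\: y| == 1%N.
  by rewrite cardsD (setIidPr sub) -cd subSnn.
case/cards1P: c1 => b hb.
have hbb : b \in x :\: y by rewrite hb set11.
move: (hbb); rewrite inE => /andP[bny bx].
exists b => //; apply/setP => c; rewrite !inE.
case cy: (c \in y).
  rewrite (subsetP sub _ cy) andbT; apply/esym/negP => /eqP ecb; by move: bny; rewrite -ecb cy.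
case cx: (c \in x); rewrite ?andbF //.
have : c \in x :\: y by rewrite inE cy cx.
by rewrite hb inE => ->.
Qed.

Lemma imU1 y x : (x \in [set c |: y | c in ~: y]) = (y \subset x) && (#|y|.+1 == #|x|).
Proof.
apply/imsetP/andP.
  case=> a; rewrite inE => ha ->; split; first exact: subsetUr.
  by rewrite cardsU1 ha add1n.
case=> sub /eqP cd.
have c1 : #|x :\: y| == 1%N.
  by rewrite cardsD (setIidPr sub) -cd subSnn.
case/cards1P: c1 => a ha.
have haa : a \in x :\: y by rewrite ha set11.
move: (haa); rewrite inE => /andP[any ax].
exists a; first by rewrite inE.
apply/setP => c; rewrite !inE.
case cy: (c \in y); first by rewrite orbT (subsetP sub _ cy).
rewrite orbF; case cx: (c \in x).
  have : c \in x :\: y by rewrite inE cy cx.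
  by rewrite ha inE => ->.
by apply/esym/eqP => eca; rewrite eca ax in cx.
Qed.

Lemma UpE f x : Up f x = \sum_(y : {set 'I_n} | (y \subset x) && (#|y|.+1 == #|x|)) f y.
Proof.
have E : \sum_(y in [set x :\ c | c in x]) f y = \sum_(b in x) f (x :\ b).
  apply: big_imset.
  move=> b1 b2 h1 h2 E; apply/eqP; apply: contraT => ne.
  have : b1 \in x :\ b2 by rewrite !inE ne h1.
  by rewrite -E !inE eqxx.
rewrite /Up -E.
by apply: eq_bigl => y; rewrite imD1.
Qed.

Lemma DnE f y : Dn f y = \sum_(x : {set 'I_n} | (y \subset x) && (#|y|.+1 == #|x|)) f x.
Proof.
rewrite /Dn (eq_bigl (fun a => a \in ~: y)); last by move=> a; rewrite inE.
have E : \sum_(x in [set c |: y | c in ~: y]) f x = \sum_(a in ~: y) f (a |: y).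
  apply: big_imset.
  move=> a1 a2; rewrite !inE => h1 h2 E; apply/eqP; apply: contraT => ne.
  have : a1 \in a2 |: y by rewrite -E !inE eqxx.
  by rewrite !inE (negbTE ne) (negbTE h1).
rewrite -E.
by apply: eq_bigl => x; rewrite imU1.
Qed.

Lemma UpK f x : Up f x = \sum_(y : {set 'I_n}) f y * Kr y x.
Proof.
rewrite UpE big_mkcond /=; apply: eq_bigr => y _.
by rewrite /Kr; case: ifP => _; rewrite ?mulr1 ?mulr0.
Qed.

Lemma DnK f y : Dn f y = \sum_(x : {set 'I_n}) f x * Kr y x.
Proof.
rewrite DnE big_mkcond /=; apply: eq_bigr => x _.
by rewrite /Kr; case: ifP => _; rewrite ?mulr1 ?mulr0.
Qed.

Lemma sum_dlt (F : {set 'I_n} -> R) y : \sum_(w : {set 'I_n}) dlt y w * F w = F y.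
Proof.
rewrite (bigD1 y) //= /dlt eqxx mul1r big1 ?addr0 // => w /negbTE ->.
by rewrite mul0r.
Qed.

Lemma sum_dlt' (F : {set 'I_n} -> R) y : \sum_(w : {set 'I_n}) F w * dlt y w = F y.
Proof. by rewrite -(sum_dlt F y); apply: eq_bigr => w _; rewrite mulrC. Qed.

Lemma Up_loc f g x : (forall y, #|y|.+1 = #|x| -> f y = g y) -> Up f x = Up g x.
Proof.
move=> H; rewrite !UpE; apply: eq_bigr => y /andP[_ /eqP]; exact: H.
Qed.

Lemma Dn_loc f g y : (forall x, #|x| = #|y|.+1 -> f x = g x) -> Dn f y = Dn g y.
Proof.
move=> H; rewrite !DnE; apply: eq_bigr => x /andP[_ /eqP e]; exact: H.
Qed.

Lemma Up_ext f g x : (forall y, f y = g y) -> Up f x = Up g x.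
Proof. by move=> H; apply: Up_loc => y _; apply: H. Qed.

Lemma Dn_ext f g x : (forall y, f y = g y) -> Dn f x = Dn g x.
Proof. by move=> H; apply: Dn_loc => y _; apply: H. Qed.

Lemma Up_lin a f g x : Up (fun y => a * f y + g y) x = a * Up f x + Up g x.
Proof. by rewrite /Up big_split /= mulr_sumr. Qed.

Lemma Dn_lin a f g x : Dn (fun y => a * f y + g y) x = a * Dn f x + Dn g x.
Proof. by rewrite /Dn big_split /= mulr_sumr. Qed.

Lemma Up_scale a f x : Up (fun y => a * f y) x = a * Up f x.
Proof. by rewrite /Up mulr_sumr. Qed.

Lemma Dn_scale a f x : Dn (fun y => a * f y) x = a * Dn f x.
Proof. by rewrite /Dn mulr_sumr. Qed.

Lemma Up_sub f g x : Up (fun y => f y - g y) x = Up f x - Up g x.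
Proof. by rewrite /Up -sumrB. Qed.

Lemma Dn_sub f g x : Dn (fun y => f y - g y) x = Dn f x - Dn g x.
Proof. by rewrite /Dn -sumrB. Qed.

Lemma Up0 x : Up (fun _ => 0) x = 0.
Proof. by rewrite /Up big1. Qed.

Lemma Dn0 x : Dn (fun _ => 0) x = 0.
Proof. by rewrite /Dn big1. Qed.

Lemma Up_sum (I : Type) (s : seq I) (P : pred I) (F : I -> {set 'I_n} -> R) x :
  Up (fun y => \sum_(j <- s | P j) F j y) x = \sum_(j <- s | P j) Up (F j) x.
Proof. by rewrite /Up exchange_big. Qed.

Lemma Dn_sum (I : Type) (s : seq I) (P : pred I) (F : I -> {set 'I_n} -> R) x :
  Dn (fun y => \sum_(j <- s | P j) F j y) x = \sum_(j <- s | P j) Dn (F j) x.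
Proof. by rewrite /Dn exchange_big. Qed.

End Ops.

Section Gz.
Variable R : rcfType.
Variable n : nat.
Implicit Types (x y z w : {set 'I_n}) (f g h : {set 'I_n} -> R).

Lemma sub_D1 z x b : z \subset x -> b \in x -> (z \subset x :\ b) = (b \notin z).
Proof.
move=> sz bx; apply/idP/idP.
  move=> s; apply/negP => bz; have := subsetP s b bz; by rewrite !inE eqxx.
move=> nb; apply/subsetP => c cz; rewrite !inE (subsetP sz _ cz) andbT.
by apply/negP => /eqP e; move: nb; rewrite -e cz.
Qed.

Lemma sum_card (A : {set 'I_n}) : \sum_(b in A) (1 : R) = #|A|%:R.
Proof. by rewrite sumr_const. Qed.

Lemma Up_gz z x : Up (gz R z) x = (#|x|%:R - #|z|%:R) * gz R z x.
Proof.
rewrite /Up /gz; case sz: (z \subset x); last first.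
  rewrite mulr0 big1 // => b bx; case s: (z \subset x :\ b) => //.
  by move: sz; rewrite (subset_trans s (subD1set x b)).
rewrite mulr1 (eq_bigr (fun b => if b \notin z then 1 else 0)); last first.
  by move=> b bx; rewrite sub_D1 //; case: (b \notin z).
rewrite -big_mkcondr /= (eq_bigl (fun b => b \in x :\: z)); last first.
  by move=> b; rewrite !inE andbC.
rewrite sum_card cardsD (setIidPr sz) natrB //; exact: subset_leq_card.
Qed.

Lemma subU1_D1 z a y : (z \subset a |: y) = (z :\ a \subset y).
Proof.
apply/subsetP/subsetP => H c.
  rewrite !inE => /andP[ca cz]; move: (H c cz); rewrite !inE.
  by rewrite (negbTE ca).
move=> cz; rewrite !inE; case: eqP => //= /eqP ca; apply: H.
by rewrite !inE ca cz.
Qed.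

Lemma subD1_sub z a y : z :\ a \subset y -> (a \in z -> a \in y) -> z \subset y.
Proof.
move=> s H; apply/subsetP => c cz; case: (eqVneq c a) => [e|ne].
  by rewrite e; apply: H; rewrite -e.
by apply: (subsetP s); rewrite !inE ne cz.
Qed.

Lemma cardC' y : #|~: y| = (n - #|y|)%N.
Proof. by rewrite cardsCs setCK card_ord. Qed.

Lemma Dn_gz z y : Dn (gz R z) y =
  ((n - #|y|)%:R - #|z|%:R) * gz R z y + \sum_(a in z) gz R (z :\ a) y.
Proof.
rewrite /Dn /gz; case sz: (z \subset y).
  rewrite mulr1 (eq_bigr (fun _ => 1)); last first.
    by move=> a _; rewrite (subset_trans sz (subsetUr _ _)).
  rewrite [X in _ = _ + X](eq_bigr (fun _ => 1)); last first.
    by move=> a _; rewrite (subset_trans (subD1set z a) sz).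
  rewrite (eq_bigl (fun a => a \in ~: y)); last by move=> a; rewrite inE.
  by rewrite !sum_card cardC' subrK.
rewrite mulr0 add0r big_mkcond [RHS]big_mkcond /=; apply: eq_bigr => a _.
rewrite subU1_D1; case ay: (a \in y); case az: (a \in z) => //=.
- case s: (z :\ a \subset y) => //.
  by move: sz; rewrite (subD1_sub s) // => _; rewrite ay.
- case s: (z :\ a \subset y) => //.
  by move: sz; rewrite (subD1_sub s) // => h; move: az; rewrite h.
Qed.

Definition lam (i k : nat) : R := (i.+1%:R - k%:R) * ((n - i)%:R - k%:R).

Lemma TG z x i : #|x| = i ->
  Dn (Up (gz R z)) x = lam i #|z| * gz R z x
     + (i.+1%:R - #|z|%:R) * \sum_(a in z) gz R (z :\ a) x.
Proof.
move=> hx.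
have -> : Dn (Up (gz R z)) x = (i.+1%:R - #|z|%:R) * Dn (gz R z) x.
  rewrite /Dn mulr_sumr; apply: eq_bigr => a ha.
  by rewrite Up_gz cardsU1 ha add1n hx.
rewrite Dn_gz hx /lam; ring.
Qed.

Definition U' (i k : nat) h := exists c : {set 'I_n} -> R,
  forall x, #|x| = i -> h x = \sum_(z : {set 'I_n} | (#|z| < k)%N) c z * gz R z x.

Lemma U'0 i k : U' i k (fun _ => 0).
Proof. by exists (fun _ => 0) => x _; rewrite big1 // => z _; rewrite mul0r. Qed.

Lemma U'ext i k f g : U' i k f -> (forall x, #|x| = i -> g x = f x) -> U' i k g.
Proof. by case=> c Hc H; exists c => x hx; rewrite H // Hc. Qed.

Lemma U'lin i k a f g : U' i k f -> U' i k g -> U' i k (fun x => a * f x + g x).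
Proof.
case=> c Hc [d Hd]; exists (fun z => a * c z + d z) => x hx.
rewrite Hc // Hd // mulr_sumr -big_split /=; apply: eq_bigr => z _; ring.
Qed.

Lemma U'add i k f g : U' i k f -> U' i k g -> U' i k (fun x => f x + g x).
Proof. by move=> Hf Hg; apply: U'ext (U'lin 1 Hf Hg) _ => x _; rewrite mul1r. Qed.

Lemma U'scale i k a f : U' i k f -> U' i k (fun x => a * f x).
Proof. by move=> Hf; apply: U'ext (U'lin a Hf (U'0 i k)) _ => x _; rewrite addr0. Qed.

Lemma U'sum i k (I : Type) (s : seq I) (P : pred I) (F : I -> {set 'I_n} -> R) :
  (forall j, P j -> U' i k (F j)) -> U' i k (fun x => \sum_(j <- s | P j) F j x).
Proof.
move=> H; elim: s => [|j s IH].
  by apply: U'ext (U'0 i k) _ => x _; rewrite big_nil.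
case Pj: (P j).
  by apply: U'ext (U'add (H j Pj) IH) _ => x _; rewrite big_cons Pj.
by apply: U'ext IH _ => x _; rewrite big_cons Pj.
Qed.

Lemma U'g i k z : (#|z| < k)%N -> U' i k (gz R z).
Proof.
move=> hz; exists (dlt R z) => x _.
rewrite (bigD1 z) //= /dlt eqxx mul1r big1 ?addr0 // => w /andP[_ /negbTE ->].
by rewrite mul0r.
Qed.

Lemma U'mono i k k' f : (k <= k')%N -> U' i k f -> U' i k' f.
Proof.
move=> kk [c Hc]; apply: U'ext (Hc); apply: U'sum => z hz; apply: U'scale.
by apply: U'g; apply: leq_trans kk.
Qed.

Lemma U'full i f : U' i i.+1 f.
Proof.
exists (fun z => if #|z| == i then f z else 0) => x hx.
rewrite (bigD1 x) /=; last by rewrite hx.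
rewrite hx eqxx /gz subxx mulr1 big1 ?addr0 // => z /andP[hz nzx].
case: eqP => [ez|_]; last by rewrite mul0r.
case s: (z \subset x); rewrite ?mulr0 //.
have : z == x by rewrite eqEcard s ez hx leqnn.
by rewrite (negbTE nzx).
Qed.

Lemma U'0k i f : U' i 0 f -> forall x, #|x| = i -> f x = 0.
Proof. by case=> c Hc x hx; rewrite Hc // big_pred0. Qed.

Lemma inU_U' i j h : inU i j h <-> U' i j.+1 h.
Proof.
have E : forall (c : {set 'I_n} -> R) x, #|x| = i ->
   \sum_(z : {set 'I_n} | (#|z| <= j)%N && (#|z| <= i)%N) c z * gz R z x =
   \sum_(z : {set 'I_n} | (#|z| < j.+1)%N) c z * gz R z x.
  move=> c x hx; rewrite big_mkcondr /=; apply: eq_big => z; first by rewrite ltnS.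
  move=> _; case: ifP => // hi; rewrite /gz; case s: (z \subset x); last by rewrite mulr0.
  by move: hi; rewrite -hx subset_leq_card.
split; case=> c Hc; exists c => x hx; rewrite Hc //; first exact: E.
by rewrite E.
Qed.

Lemma Lstep i k h : U' i k.+1 h -> U' i k (fun x => Dn (Up h) x - lam i k * h x).
Proof.
case=> c Hc.
pose G x := \sum_(z : {set 'I_n} | (#|z| < k.+1)%N) c z * ((lam i #|z| - lam i k) * gz R z x
          + (i.+1%:R - #|z|%:R) * \sum_(a in z) gz R (z :\ a) x).
apply: (@U'ext _ _ G).
  apply: U'sum => z hz; apply: U'scale; apply: U'add.
    case: (ltngtP #|z| k) => hk.
    - by apply: U'scale; apply: U'g.
    - by move: hz; rewrite ltnS leqNgt hk.
    - by apply: U'ext (U'0 i k) _ => x _; rewrite hk subrr mul0r.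
  apply: U'scale; apply: U'sum => a az; apply: U'g.
  by move: hz; rewrite ltnS (cardsD1 a z) az add1n.
move=> x hx.
have e1 : Dn (Up h) x = \sum_(z : {set 'I_n} | (#|z| < k.+1)%N) c z * Dn (Up (gz R z)) x.
  rewrite (@Dn_loc _ _ _ (Up (fun y => \sum_(z : {set 'I_n} | (#|z| < k.+1)%N) c z * gz R z y))); last first.
    move=> y hy; apply: Up_loc => w hw; apply: Hc.
    by move: hw; rewrite hy hx => -[].
  rewrite (@Dn_ext _ _ _ (fun y => \sum_(z : {set 'I_n} | (#|z| < k.+1)%N) c z * Up (gz R z) y)); last first.
    by move=> y; rewrite Up_sum; apply: eq_bigr => z _; rewrite Up_scale.
  by rewrite Dn_sum; apply: eq_bigr => z _; rewrite Dn_scale.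
rewrite e1 Hc // mulr_sumr -sumrB /G; apply: eq_bigr => z _.
rewrite (TG z hx); ring.
Qed.

End Gz.

Section Sd.
Variable R : rcfType.
Variable n : nat.
Implicit Types (x y z w : {set 'I_n}) (f g h : {set 'I_n} -> R).

Lemma sdot_ext i f f' g g' : (forall x, #|x| = i -> f x = f' x) ->
  (forall x, #|x| = i -> g x = g' x) -> sdot i f g = sdot i f' g'.
Proof. by move=> Hf Hg; apply: eq_bigr => x /eqP hx; rewrite Hf // Hg. Qed.

Lemma sdotC i f g : sdot i f g = sdot i g f.
Proof. by apply: eq_bigr => x _; rewrite mulrC. Qed.

Lemma sdot_linl i a f f' g : sdot i (fun x => a * f x + f' x) g = a * sdot i f g + sdot i f' g.
Proof. by rewrite /sdot mulr_sumr -big_split /=; apply: eq_bigr => x _; ring. Qed.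

Lemma sdot_subl i a f f' g : sdot i (fun x => f x - a * f' x) g = sdot i f g - a * sdot i f' g.
Proof. by rewrite /sdot mulr_sumr -sumrB /=; apply: eq_bigr => x _; ring. Qed.

Lemma sdot_scalel i a f g : sdot i (fun x => a * f x) g = a * sdot i f g.
Proof. by rewrite /sdot mulr_sumr; apply: eq_bigr => x _; ring. Qed.

Lemma sdot0l i g : sdot i (fun _ => 0) g = 0.
Proof. by rewrite /sdot big1 // => x _; rewrite mul0r. Qed.

Lemma sdot_suml i (I : Type) (s : seq I) (P : pred I) (F : I -> {set 'I_n} -> R) g :
  sdot i (fun x => \sum_(j <- s | P j) F j x) g = \sum_(j <- s | P j) sdot i (F j) g.
Proof.
rewrite /sdot exchange_big /=; apply: eq_bigr => x _; by rewrite mulr_suml.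
Qed.

Lemma sdot_pos i f : sdot i f f = 0 -> forall x, #|x| = i -> f x = 0.
Proof.
move=> H x hx.
have H0 : forall y : {set 'I_n}, #|y| == i -> f y * f y = 0.
  by apply: (psumr_eq0P _ H) => y _; rewrite -expr2 sqr_ge0.
have := H0 x; rewrite hx eqxx => /(_ isT) /eqP.
by rewrite mulf_eq0 orbb => /eqP.
Qed.

Lemma ADJ i f g : sdot i.+1 (Up f) g = sdot i f (Dn g).
Proof.
rewrite /sdot (eq_bigr (fun x => \sum_(y : {set 'I_n}) f y * Kr R y x * g x)); last first.
  by move=> x _; rewrite UpK mulr_suml.
rewrite [RHS](eq_bigr (fun y => \sum_(x : {set 'I_n}) f y * (g x * Kr R y x))); last first.
  by move=> y _; rewrite DnK mulr_sumr.
transitivity (\sum_(x : {set 'I_n}) \sum_(y : {set 'I_n})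
    (if #|x| == i.+1 then f y * Kr R y x * g x else 0)).
  rewrite big_mkcond; apply: eq_bigr => x _; case: ifP => _ //; by rewrite big1.
transitivity (\sum_(y : {set 'I_n}) \sum_(x : {set 'I_n})
    (if #|y| == i then f y * (g x * Kr R y x) else 0)); last first.
  rewrite [RHS]big_mkcond; apply: eq_bigr => x _; case: ifP => _ //; by rewrite big1.
rewrite exchange_big; apply: eq_bigr => y _; apply: eq_bigr => x _.
rewrite /Kr; case hb: ((y \subset x) && (#|y|.+1 == #|x|)).
  by move/andP: hb => [_ /eqP e]; rewrite -e eqSS; case: ifP => _ //; ring.
by case: ifP => _; case: ifP => _; rewrite /= ?mulr0 ?mul0r.
Qed.

Lemma SA i f g : sdot i (Dn (Up f)) g = sdot i f (Dn (Up g)).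
Proof. by rewrite sdotC -ADJ sdotC ADJ. Qed.

Lemma DU_loc i f g x : #|x| = i -> (forall y, #|y| = i -> f y = g y) ->
  Dn (Up f) x = Dn (Up g) x.
Proof.
move=> hx H; apply: Dn_loc => y hy; apply: Up_loc => w hw; apply: H.
by move: hw; rewrite hy hx => -[].
Qed.

Lemma DU_scale a f x : Dn (Up (fun y => a * f y)) x = a * Dn (Up f) x.
Proof.
by rewrite -Dn_scale; apply: Dn_ext => y; rewrite Up_scale.
Qed.

Lemma TP i k g : U' i k g -> U' i k (Dn (Up g)).
Proof.
case: k => [|k] Hg.
  apply: U'ext (U'0 R n i 0) _ => x hx.
  rewrite (@DU_loc i _ (fun _ => 0)) //; last exact: U'0k Hg.
  by rewrite (@Dn_ext _ _ _ (fun _ => 0)) ?Dn0 // => y; rewrite Up0.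
have H1 := U'mono (leqnSn k) (Lstep Hg).
apply: U'ext (U'add H1 (U'scale (lam R n i k) Hg)) _ => x _.
by rewrite subrK.
Qed.

Definition Vt i t f := U' i t.+1 f /\ forall g, U' i t g -> sdot i f g = 0.

Lemma Vt_ext i t f g : Vt i t f -> (forall x, #|x| = i -> g x = f x) -> Vt i t g.
Proof.
case=> H1 H2 E; split; first exact: U'ext H1 E.
by move=> h Hh; rewrite -(H2 h Hh); apply: sdot_ext.
Qed.

Lemma Vt_scale i t a f : Vt i t f -> Vt i t (fun x => a * f x).
Proof.
case=> H1 H2; split; first exact: U'scale.
by move=> h Hh; rewrite sdot_scalel H2 // mulr0.
Qed.

Lemma Vt_eig i t f : Vt i t f -> forall x, #|x| = i -> Dn (Up f) x = lam R n i t * f x.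
Proof.
case=> H1 H2; set w := fun x => Dn (Up f) x - lam R n i t * f x.
have Uw : U' i t w := Lstep H1.
have : sdot i w w = 0.
  rewrite /w sdot_subl SA.
  rewrite (H2 _ Uw).
  have -> : sdot i f (Dn (Up w)) = 0 by apply: H2; apply: TP.
  by rewrite mulr0 subr0.
move/sdot_pos => H x hx; apply/eqP; rewrite -subr_eq0; apply/eqP; exact: H.
Qed.

Lemma Up_U' i k f : U' i k f -> U' i.+1 k (Up f).
Proof.
case=> c Hc.
pose G x := \sum_(z : {set 'I_n} | (#|z| < k)%N) c z * ((#|x|%:R - #|z|%:R) * gz R z x).
apply: (@U'ext _ _ _ _ G).
  apply: U'sum => z hz; apply: U'scale.
  apply: U'ext (U'scale ((i.+1)%:R - #|z|%:R) (U'g R i.+1 hz)) _.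
  by move=> x ->.
move=> x hx; rewrite (@Up_loc _ _ _ (fun y => \sum_(z : {set 'I_n} | (#|z| < k)%N) c z * gz R z y)).
  by rewrite Up_sum; apply: eq_bigr => z _; rewrite Up_scale Up_gz.
by move=> y hy; apply: Hc; move: hy; rewrite hx => -[].
Qed.

Lemma Dn_U' i k g : U' i.+1 k g -> U' i k (Dn g).
Proof.
case=> c Hc.
pose G y := \sum_(z : {set 'I_n} | (#|z| < k)%N) c z * (((n - #|y|)%:R - #|z|%:R) * gz R z y
   + \sum_(a in z) gz R (z :\ a) y).
apply: (@U'ext _ _ _ _ G).
  apply: U'sum => z hz; apply: U'scale; apply: U'add.
    apply: U'ext (U'scale ((n - i)%:R - #|z|%:R) (U'g R i hz)) _.
    by move=> x ->.
  apply: U'sum => a az; apply: U'g; apply: leq_trans hz.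
  by rewrite (cardsD1 a z) az add1n.
move=> y hy; rewrite (@Dn_loc _ _ _ (fun y => \sum_(z : {set 'I_n} | (#|z| < k)%N) c z * gz R z y)).
  by rewrite Dn_sum; apply: eq_bigr => z _; rewrite Dn_scale Dn_gz.
by move=> x hx; apply: Hc; rewrite hx hy.
Qed.

Lemma Vt_up i t f : Vt i t f -> Vt i.+1 t (Up f).
Proof.
case=> H1 H2; split; first exact: Up_U'.
by move=> g Hg; rewrite ADJ; apply: H2; apply: Dn_U'.
Qed.

Lemma Vt_inj i t f : Vt i t f -> lam R n i t != 0 ->
  (forall x, #|x| = i.+1 -> Up f x = 0) -> forall x, #|x| = i -> f x = 0.
Proof.
move=> V nz H x hx; have := Vt_eig V hx.
rewrite (@Dn_loc _ _ _ (fun _ => 0)); last by move=> y hy; apply: H; rewrite hy hx.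
by rewrite Dn0 => /esym/eqP; rewrite mulf_eq0 (negbTE nz) => /eqP.
Qed.

Lemma ker_Vt t f : (forall y, #|y|.+1 = t -> Dn f y = 0) -> Vt t t f.
Proof.
move=> H; split; first exact: U'full.
move=> g [c Hc].
rewrite (@sdot_ext t f f g (fun x => \sum_(z : {set 'I_n} | (#|z| < t)%N) c z * gz R z x)) //.
rewrite sdotC sdot_suml big1 // => z hz.
rewrite sdot_scalel; apply/eqP; rewrite mulf_eq0; apply/orP; right; apply/eqP.
case: t H Hc hz => // t H Hc hz.
have nz : (t.+1%:R - #|z|%:R : R) != 0.
  by rewrite subr_eq0 eqr_nat; apply: contraTneq hz => ->; rewrite ltnn.
rewrite (@sdot_ext _ _ (fun x => (t.+1%:R - #|z|%:R)^-1 * Up (gz R z) x) f f) //; last first.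
  by move=> x hx; rewrite Up_gz hx mulrA mulVf // mul1r.
rewrite sdot_scalel ADJ (@sdot_ext _ _ (gz R z) _ (fun _ => 0)) //.
  by rewrite sdotC sdot0l mulr0.
by move=> y hy; apply: H; rewrite hy.
Qed.

Lemma Vt_top r f : Vt r.+1 r.+1 f -> forall y, #|y| = r -> Dn f y = 0.
Proof.
case=> _ H y hy.
have <- : sdot r.+1 f (gz R y) = Dn f y.
  rewrite DnE /sdot big_mkcond [RHS]big_mkcond /=; apply: eq_bigr => x _.
  rewrite hy /gz [r.+1 == _]eq_sym; case: (#|x| == r.+1); case: (y \subset x) => /=;
  by rewrite ?mulr1 ?mulr0.
by apply: H; apply: U'g; rewrite hy.
Qed.

Definition op i k g : {set 'I_n} -> R := fun x => Dn (Up g) x - lam R n i k * g x.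
Definition chain i (l : seq nat) g := foldr (op i) g l.

Lemma chain_U' i len a g : U' i (a + len) g -> U' i a (chain i (iota a len) g).
Proof.
elim: len a => [|len IH] a Hg; first by move: Hg; rewrite addn0.
rewrite /= /op; apply: Lstep; apply: IH; by rewrite addSnnS.
Qed.

Lemma chain_eig i mu f : (forall x, #|x| = i -> Dn (Up f) x = mu * f x) ->
  forall l x, #|x| = i -> chain i l f x = (\prod_(k <- l) (mu - lam R n i k)) * f x.
Proof.
move=> Hf; elim => [|k l IH] x hx; first by rewrite big_nil mul1r.
rewrite /= {1}/op big_cons IH //.
rewrite (@DU_loc i _ (fun y => (\prod_(k <- l) (mu - lam R n i k)) * f y)) //.
by rewrite DU_scale Hf //; ring.
Qed.

Lemma op_SA i k f g : sdot i f (op i k g) = sdot i (op i k f) g.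
Proof. by rewrite /op sdot_subl sdotC sdot_subl SA sdotC; congr (_ - _); rewrite sdotC. Qed.

Lemma chain_SA i l f g : sdot i f (chain i l g) = sdot i (chain i (rev l) f) g.
Proof.
elim: l f => [|k l IH] f //=.
rewrite op_SA IH rev_cons -cats1 /chain foldr_cat //.
Qed.

Lemma eig_Vt i s f : (s <= i)%N -> (forall k, (k <= i)%N -> k != s -> lam R n i k != lam R n i s) ->
  (forall x, #|x| = i -> Dn (Up f) x = lam R n i s * f x) -> Vt i s f.
Proof.
move=> si dis Hf; split.
  set l := iota s.+1 (i - s).
  have U1 : U' i s.+1 (chain i l f).
    apply: chain_U'; rewrite addSn subnKC //; exact: U'full.
  set c := \prod_(k <- l) (lam R n i s - lam R n i k).
  have nz : c != 0.
    rewrite prodf_seq_neq0; apply/allP => k; rewrite mem_iota => /andP[h1 h2] /=.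
    rewrite subr_eq0 eq_sym; apply: dis; first by move: h2; rewrite addSn subnKC.
    by apply: contraTneq h1 => ->; rewrite ltnn.
  apply: U'ext (U'scale c^-1 U1) _ => x hx.
  by rewrite (chain_eig Hf) // mulrA mulVf // mul1r.
move=> g Hg.
set l := iota 0 s.
set c := \prod_(k <- rev l) (lam R n i s - lam R n i k).
have nz : c != 0.
  rewrite prodf_seq_neq0; apply/allP => k; rewrite mem_rev mem_iota add0n => /andP[_ h2] /=.
  rewrite subr_eq0 eq_sym; apply: dis; first by apply: ltnW; apply: leq_trans h2 si.
  by apply: contraTneq h2 => ->; rewrite ltnn.
have : c * sdot i f g = 0.
  rewrite -sdot_scalel (@sdot_ext _ _ (chain i (rev l) f) g g) //; last first.
    by move=> x hx; rewrite (chain_eig Hf).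
  rewrite -chain_SA (@sdot_ext _ f f _ (fun _ => 0)) //; first by rewrite sdotC sdot0l.
  apply: U'0k; apply: chain_U'; by rewrite add0n.
by move/eqP; rewrite mulf_eq0 (negbTE nz) => /eqP.
Qed.

End Sd.

Ltac plia := repeat (match goal with
  | H : context [ (?a).-1 ] |- _ => rewrite -(subn1 a) in H
  | |- context [ (?a).-1 ] => rewrite -(subn1 a) end); lia.

Lemma bin_mono n t : (2 * t <= n)%N -> ('C(n, t.-1) <= 'C(n, t))%N.
Proof.
case: t => [|m] h //=.
have h1 : (m.+1 <= n - m)%N by lia.
rewrite -(@leq_pmul2l m.+1) // mul_bin_left.
by apply: leq_mul.
Qed.

Lemma mult_sum n r : (2 * r <= n)%N -> (\sum_(t < r.+1) mult n t = 'C(n, r))%N.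
Proof.
elim: r => [|r IH] h; first by rewrite big_ord1 /mult subn0.
rewrite big_ord_recr /= IH; last by lia.
rewrite /mult subnKC //; have := bin_mono (t := r.+1) h; by [].
Qed.

Lemma mult_total n r : (1 <= r)%N -> (2 * r <= n)%N ->
  (\sum_(t < r) (mult n t + mult n t) + mult n r = 'C(n, r.-1) + 'C(n, r))%N.
Proof.
move=> h1 h2; case: r h1 h2 => // r _ h2.
rewrite big_split /= mult_sum; last by lia.
have := bin_mono (t := r.+1) h2; rewrite /mult /= => hb.
lia.
Qed.

Section Mat.
Variable R : rcfType.
Variable n r : nat.
Implicit Types (x y z w : {set 'I_n}) (f g h : {set 'I_n} -> R).

Local Notation L := (layers n r).
Local Notation N := #|layers n r|.

Lemma hadjE x y : hadj y x =
  ((y \subset x) && (#|y|.+1 == #|x|)) || ((x \subset y) && (#|x|.+1 == #|y|)).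
Proof.
rewrite /hadj cardsU.
have -> : (y :\: x) :&: (x :\: y) = set0.
  apply/setP => c; rewrite !inE; by case: (c \in x); case: (c \in y).
rewrite cards0 subn0 -!setD_eq0 -!cards_eq0.
rewrite -(cardsID x y) -(cardsID y x) setIC.
move: #|_ :&: _| #|y :\: x| #|x :\: y| => k a b.
apply/idP/idP; plia.
Qed.

Lemma sum_hadj (F : {set 'I_n} -> R) x : \sum_(y : {set 'I_n}) F y * (hadj y x)%:R = Up F x + Dn F x.
Proof.
rewrite UpE DnE [X in _ = X + _]big_mkcond [X in _ = _ + X]big_mkcond -big_split /=; apply: eq_bigr => y _.
rewrite hadjE; case h1: ((y \subset x) && (#|y|.+1 == #|x|)).
  case h2: ((x \subset y) && (#|x|.+1 == #|y|)); last by rewrite mulr1 addr0.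
  move/andP: h1 => [_ /eqP e1]; move/andP: h2 => [_ /eqP e2]; plia.
by case: ifP => _; rewrite /= ?mulr1 ?mulr0 ?add0r.
Qed.

Lemma inL x : (x \in L) = (#|x| == r.-1) || (#|x| == r).
Proof. by rewrite inE. Qed.

Lemma V1 (v : 'rV[R]_N) i : vfun v (enum_val i) = v 0 i.
Proof.
rewrite /vfun (bigD1 i) //= eqxx big1 ?addr0 // => k nk.
by rewrite (inj_eq enum_val_inj) (negbTE nk).
Qed.

Lemma V2 (v : 'rV[R]_N) x : x \notin L -> vfun v x = 0.
Proof.
move=> nx; rewrite /vfun big1 // => k _; case: eqP => // e.
by move: nx; rewrite -e enum_valP.
Qed.

Lemma V3 (v : 'rV[R]_N) (F : {set 'I_n} -> R) :
  \sum_(i < N) v 0 i * F (enum_val i) = \sum_(y : {set 'I_n}) vfun v y * F y.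
Proof.
rewrite /vfun (eq_bigr (fun y => \sum_(i < N) v 0 i * ((enum_val i == y)%:R * F y))); last first.
  move=> y _; rewrite mulr_suml; apply: eq_bigr => i _.
  by case: eqP => _; rewrite /= ?mul1r ?mul0r ?mulr0.
rewrite exchange_big /=; apply: eq_bigr => i _; rewrite -mulr_sumr.
congr (_ * _); rewrite (bigD1 (enum_val i)) //= eqxx mul1r big1 ?addr0 //.
by move=> y /negbTE ny; rewrite eq_sym ny mul0r.
Qed.

Lemma vfun_restr (v : 'rV[R]_N) k x : #|x| = k -> restr v k x = vfun v x.
Proof. by rewrite /restr => ->; rewrite eqxx. Qed.

Lemma AX (v : 'rV[R]_N) x : (1 <= r)%N -> x \in L ->
  Up (vfun v) x + Dn (vfun v) x =
  if #|x| == r then Up (restr v r.-1) x else Dn (restr v r) x.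
Proof.
move=> hr xL; case: (eqVneq #|x| r) => [hx|hx].
  rewrite (@Dn_loc _ _ _ (fun _ => 0)) ?Dn0 ?addr0; last first.
    by move=> y hy; apply: V2; rewrite inL hy hx; apply/norP; split; apply/eqP; plia.
  by apply: Up_loc => y hy; rewrite vfun_restr //; plia.
have hx' : #|x| = r.-1 by move: xL; rewrite inL (negbTE hx) orbF => /eqP.
rewrite (@Up_loc _ _ _ (fun _ => 0)) ?Up0 ?add0r; last first.
  by move=> y hy; apply: V2; rewrite inL; apply/norP; split; apply/eqP; plia.
by apply: Dn_loc => y hy; rewrite vfun_restr //; plia.
Qed.

Lemma EIG (v : 'rV[R]_N) a : (1 <= r)%N ->
  (v <= eigenspace (adjmx R n r) a)%MS <->
  (forall x, #|x| = r -> Up (restr v r.-1) x = a * restr v r x) /\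
  (forall x, #|x| = r.-1 -> Dn (restr v r) x = a * restr v r.-1 x).
Proof.
move=> hr.
have key : forall j, (v *m adjmx R n r) 0 j =
    if #|enum_val j| == r then Up (restr v r.-1) (enum_val j) else Dn (restr v r) (enum_val j).
  move=> j; rewrite mxE (eq_bigr (fun i => v 0 i * (hadj (enum_val i) (enum_val j))%:R)); last first.
    by move=> i _; rewrite mxE.
  by rewrite (V3 v (fun y => (hadj y (enum_val j))%:R)) sum_hadj AX // enum_valP.
split.
  move/eigenspaceP/rowP => E; split => x hx.
    have xL : x \in L by rewrite inL hx eqxx orbT.
    have := E (enum_rank_in xL x).
    rewrite key mxE enum_rankK_in // hx eqxx => ->.
    by rewrite -V1 enum_rankK_in // vfun_restr.
  have xL : x \in L by rewrite inL hx eqxx.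
  have := E (enum_rank_in xL x).
  rewrite key mxE enum_rankK_in // hx.
  have -> : (r.-1 == r) = false by apply/eqP; plia.
  by move=> ->; rewrite -V1 enum_rankK_in // vfun_restr.
case=> E1 E2; apply/eigenspaceP/rowP => j; rewrite key mxE -V1.
case: (eqVneq #|enum_val j| r) => [hx|hx].
  by rewrite E1 // vfun_restr.
have hx' : #|enum_val j| = r.-1.
  by move: (enum_valP j); rewrite inL (negbTE hx) orbF => /eqP.
by rewrite E2 // vfun_restr.
Qed.

Definition vof (F : {set 'I_n} -> R) : 'rV[R]_N := \row_i F (enum_val i).

Lemma vfun_vof F x : x \in L -> vfun (vof F) x = F x.
Proof. by move=> xL; rewrite -(enum_rankK_in xL xL) V1 mxE. Qed.

Lemma restr_vof F k x : (k = r.-1 \/ k = r) -> #|x| = k -> restr (vof F) k x = F x.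
Proof.
move=> hk hx; rewrite vfun_restr // vfun_vof // inL hx.
by case: hk => ->; rewrite eqxx ?orbT.
Qed.

End Mat.

Section Main.
Variable R : rcfType.
Variable n r : nat.
Implicit Types (x y z w : {set 'I_n}) (f g h : {set 'I_n} -> R).

Local Notation L := (layers n r).
Local Notation N := #|layers n r|.
Local Notation A := (adjmx R n r).

Lemma lam_nat i k : (k <= i.+1)%N -> (k <= n - i)%N -> lam R n i k = ((i.+1 - k) * (n - i - k))%:R.
Proof. by move=> h1 h2; rewrite /lam natrM -!natrB. Qed.

Lemma inV_Vt i t f : inV i t f <-> Vt i t f.
Proof.
split.
  case=> H1 H2; split; first exact/inU_U'.
  case: t H1 H2 => [|t] H1 H2 g Hg.
    rewrite (@sdot_ext _ _ i f f g (fun _ => 0)) //; first by rewrite sdotC sdot0l.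
    exact: U'0k.
  by apply: H2; apply/inU_U'.
case=> H1 H2; split; first exact/inU_U'.
case: t H1 H2 => [|t] H1 H2 // g Hg.
by apply: H2; apply/inU_U'.
Qed.

Lemma UpS f x : (1 <= r)%N -> #|x| = r ->
  Up f x = \sum_(y : {set 'I_n} | (#|y| == r.-1) && (y \subset x)) f y.
Proof.
move=> hr hx; rewrite UpE; apply: eq_bigl => y; rewrite andbC hx.
by case: (r) hr => // r' _ /=; rewrite eqSS.
Qed.

Lemma lam_dist k t : (1 <= r)%N -> (2 * r <= n)%N -> (k <= r.-1)%N -> (t <= r.-1)%N ->
  k != t -> lam R n r.-1 k != lam R n r.-1 t.
Proof.
move=> h1 h2 hk ht nkt.
rewrite !lam_nat; try plia.
rewrite eqr_nat.
wlog lt : k t hk ht nkt / (k < t)%N.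
  move=> W; case: (ltngtP k t) => c.
  - exact: W.
  - by rewrite eq_sym; apply: W => //; rewrite eq_sym.
  - by move: nkt; rewrite c eqxx.
rewrite neq_ltn; apply/orP; right.
apply: ltn_mul; plia.
Qed.

Lemma mk_eig (v : 'rV[R]_N) (la : R) t : (1 <= r)%N -> la != 0 ->
  la * la = lam R n r.-1 t -> Vt r.-1 t (restr v r.-1) ->
  (forall x, #|x| = r -> restr v r x = la^-1 * Up (restr v r.-1) x) ->
  (v <= eigenspace A la)%MS.
Proof.
move=> hr nz hla V Hq; apply/EIG => //; split => x hx.
  by rewrite Hq // mulrA mulfV // mul1r.
rewrite (@Dn_loc _ _ _ (fun y => la^-1 * Up (restr v r.-1) y)); last first.
  by move=> y hy; apply: Hq; plia.
by rewrite Dn_scale (Vt_eig V) // -hla mulrA mulrA mulVf // mul1r.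

Qed.

Lemma eig_p (v : 'rV[R]_N) (la : R) t : (1 <= r)%N -> (2 * r <= n)%N -> (t <= r.-1)%N ->
  la != 0 -> la * la = lam R n r.-1 t -> (v <= eigenspace A la)%MS ->
  Vt r.-1 t (restr v r.-1) /\
  (forall x, #|x| = r -> restr v r x = la^-1 * Up (restr v r.-1) x).
Proof.
move=> h1 h2 ht nz hla /(EIG _ _ h1) [E1 E2].
have Hq : forall x, #|x| = r -> restr v r x = la^-1 * Up (restr v r.-1) x.
  by move=> x hx; rewrite E1 // mulrA mulVf // mul1r.
split => //.
apply: eig_Vt => //.
  move=> k hk nk; apply: lam_dist => //.
move=> x hx.
rewrite (@Dn_loc _ _ _ (fun y => la * restr v r y)); last first.
  by move=> y hy; apply: E1; plia.
by rewrite Dn_scale E2 // mulrA hla.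
Qed.

End Main.

Section Rank.
Variable R : rcfType.
Variable n r : nat.
Implicit Types (x y z w : {set 'I_n}) (f g h : {set 'I_n} -> R).

Local Notation L := (layers n r).
Local Notation N := #|layers n r|.
Local Notation A := (adjmx R n r).

Definition St t : {set {set 'I_n}} := [set x : {set 'I_n} | #|x| == t].
Definition Sp t : {set {set 'I_n}} := [set x : {set 'I_n} | #|x|.+1 == t].

Lemma card_St t : #|St t| = 'C(n, t).
Proof. by rewrite card_draws card_ord. Qed.

Lemma card_Sp t : #|Sp t| = if t is t'.+1 then 'C(n, t') else 0%N.
Proof.
case: t => [|t].
  apply/eqP; rewrite cards_eq0; apply/eqP/setP => y; by rewrite !inE.
have -> : Sp t.+1 = St t by apply/setP => y; rewrite !inE eqSS.
exact: card_St.
Qed.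

Definition fw t (w : 'rV[R]_#|St t|) : {set 'I_n} -> R :=
  fun x => \sum_(k < #|St t|) (enum_val k == x)%:R * w 0 k.

Lemma fw_e t (w : 'rV[R]_#|St t|) k : fw w (enum_val k) = w 0 k.
Proof.
rewrite /fw (bigD1 k) //= eqxx mul1r big1 ?addr0 // => j nj.
by rewrite (inj_eq enum_val_inj) (negbTE nj) mul0r.
Qed.

Definition KL (Op : ({set 'I_n} -> R) -> {set 'I_n} -> R) :=
  forall f x, Op f x = \sum_(y : {set 'I_n}) f y * Op (dlt R y) x.

Lemma KL_fw Op t (w : 'rV[R]_#|St t|) x : KL Op ->
  Op (fw w) x = \sum_(k < #|St t|) w 0 k * Op (dlt R (enum_val k)) x.
Proof.
move=> H; rewrite H /fw.
rewrite (eq_bigr (fun y => \sum_(k < #|St t|) w 0 k * ((enum_val k == y)%:R * Op (dlt R y) x))); last first.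
  move=> y _; rewrite mulr_suml; apply: eq_bigr => k _; ring.
rewrite exchange_big /=; apply: eq_bigr => k _; rewrite -mulr_sumr; congr (_ * _).
rewrite (bigD1 (enum_val k)) //= eqxx mul1r big1 ?addr0 // => y /negbTE ny.
by rewrite eq_sym ny mul0r.
Qed.

Lemma KL_Up : KL (@Up R n).
Proof.
move=> f x; rewrite UpK; apply: eq_bigr => y _; congr (_ * _).
by rewrite UpK sum_dlt.
Qed.

Lemma KL_Dn : KL (@Dn R n).
Proof.
move=> f x; rewrite DnK; apply: eq_bigr => y _; congr (_ * _).
by rewrite DnK sum_dlt.
Qed.

Lemma KL_iter k : KL (iter k (@Up R n)).
Proof.
elim: k => [|k IH] f x /=.
  rewrite (bigD1 x) //= /dlt eqxx mulr1 big1 ?addr0 // => y ny.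
  by rewrite eq_sym (negbTE ny) mulr0.
rewrite KL_Up (eq_bigr (fun w => \sum_(y : {set 'I_n}) f y * (iter k (@Up R n) (dlt R y) w * Up (dlt R w) x))); last first.
  by move=> w _; rewrite IH mulr_suml; apply: eq_bigr => y _; rewrite mulrA.
rewrite exchange_big /=; apply: eq_bigr => y _; rewrite -mulr_sumr; congr (_ * _).
by rewrite [RHS]KL_Up.
Qed.

Definition Dmat t : 'M[R]_(#|St t|, #|Sp t|) :=
  \matrix_(k, l) Dn (dlt R (enum_val k)) (enum_val l).

Lemma rank_K t : (mult n t <= \rank (kermx (Dmat t)))%N.
Proof.
rewrite mxrank_ker /mult -card_St -card_Sp; apply: leq_sub2l.
exact: rank_leq_col.
Qed.

Lemma K_Dn t (w : 'rV[R]_#|St t|) : (w <= kermx (Dmat t))%MS ->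
  forall y, #|y|.+1 = t -> Dn (fw w) y = 0.
Proof.
move/sub_kermxP/rowP => H y hy.
have yS : y \in Sp t by rewrite inE hy.
have := H (enum_rank_in yS y); rewrite !mxE => <-.
rewrite (KL_fw _ _ KL_Dn); apply: eq_bigr => k _; by rewrite mxE enum_rankK_in.
Qed.

Lemma rank_lb t a (E : ({set 'I_n} -> R) -> {set 'I_n} -> R) : KL E ->
  (forall w : 'rV[R]_#|St t|, (w <= kermx (Dmat t))%MS -> (vof r (E (fw w)) <= eigenspace A a)%MS) ->
  (forall w : 'rV[R]_#|St t|, (w <= kermx (Dmat t))%MS -> (forall x, x \in L -> E (fw w) x = 0) ->
      forall x, #|x| = t -> fw w x = 0) ->
  (mult n t <= \rank (eigenspace A a))%N.
Proof.
move=> KLE HE1 HE2.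
pose Phi : 'M[R]_(#|St t|, N) := \matrix_(k, j) E (dlt R (enum_val k)) (enum_val j).
have PhiE : forall w : 'rV[R]_#|St t|, w *m Phi = vof r (E (fw w)).
  move=> w; apply/rowP => j; rewrite !mxE (KL_fw _ _ KLE); apply: eq_bigr => k _.
  by rewrite mxE.
set K := kermx (Dmat t).
have sB : (K *m Phi <= eigenspace A a)%MS.
  apply/row_subP => i; rewrite row_mul PhiE; apply: HE1; exact: row_sub.
have C0 : (K :&: kermx Phi)%MS = 0.
  apply/row_matrixP => i; rewrite row0.
  set u := row i _.
  have uK : (u <= K)%MS by apply: submx_trans (row_sub _ _) (capmxSl _ _).
  have uP : u *m Phi = 0 by apply/sub_kermxP; apply: submx_trans (row_sub _ _) (capmxSr _ _).
  have H0 : forall x, x \in L -> E (fw u) x = 0.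
    move=> x xL; have := congr1 (fun M : 'rV[R]_N => M 0 (enum_rank_in xL x)) uP.
    by rewrite PhiE !mxE enum_rankK_in.
  apply/rowP => k; rewrite [RHS]mxE -(fw_e u k); apply: (HE2 _ uK H0).
  by have := enum_valP k; rewrite inE => /eqP.
apply: leq_trans (rank_K t) _.
have := mxrank_mul_ker K Phi; rewrite C0 mxrank0 addn0 => <-.
exact: mxrankS.
Qed.

End Rank.

Section Fin.
Variable R : rcfType.
Variable n r : nat.
Implicit Types (x y z w : {set 'I_n}) (f g h : {set 'I_n} -> R).

Local Notation L := (layers n r).
Local Notation N := #|layers n r|.
Local Notation A := (adjmx R n r).

Lemma rv1 (F : {set 'I_n} -> R) x : #|x| = r.-1 -> restr (vof r F) r.-1 x = F x.
Proof. by move=> hx; apply: restr_vof => //; left. Qed.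

Lemma rv2 (F : {set 'I_n} -> R) x : #|x| = r -> restr (vof r F) r x = F x.
Proof. by move=> hx; apply: restr_vof => //; right. Qed.

Lemma Vt_iter i t f k : Vt i t f -> Vt (i + k) t (iter k (@Up R n) f).
Proof.
move=> V; elim: k => [|k IH]; first by rewrite addn0.
by rewrite addnS /=; apply: Vt_up.
Qed.

Lemma down t f m : Vt t t f -> (forall j, (j < m)%N -> lam R n (t + j) t != 0) ->
  (forall x, #|x| = (t + m)%N -> iter m (@Up R n) f x = 0) -> forall x, #|x| = t -> f x = 0.
Proof.
move=> V; elim: m => [|m IH] Hl H.
  by move=> x hx; apply: H; rewrite addn0.
apply: IH.
  by move=> j hj; apply: Hl; apply: ltnW.
apply: (Vt_inj (Vt_iter m V)); first exact: Hl.
by move=> x hx; apply: H; rewrite addnS.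
Qed.

Lemma lb_gam t (la : R) : (1 <= r)%N -> (2 * r <= n)%N -> (t <= r.-1)%N -> la != 0 ->
  la * la = lam R n r.-1 t -> (mult n t <= \rank (eigenspace A la))%N.
Proof.
move=> h1 h2 ht nz hla.
set m := (r.-1 - t)%N.
have tm : (t + m)%N = r.-1 by rewrite /m; plia.
pose E (f : {set 'I_n} -> R) x := if #|x| == r.-1 then iter m (@Up R n) f x
   else if #|x| == r then la^-1 * iter m.+1 (@Up R n) f x else 0.
have nr : (r.-1 == r) = false by apply/eqP; plia.
apply: (@rank_lb R n r t la E).
- move=> f x; rewrite /E; case: ifP => c1.
    exact: KL_iter.
  case: ifP => c2; last by rewrite big1 // => y _; rewrite mulr0.
  by rewrite KL_iter mulr_sumr; apply: eq_bigr => y _; ring.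
- move=> w wK.
  have V := Vt_iter m (ker_Vt (K_Dn wK)); rewrite tm in V.
  apply: (mk_eig (t := t)) => //.
    apply: Vt_ext V _ => x hx; rewrite rv1 //.
    by rewrite /E hx eqxx.
  move=> x hx; rewrite rv2 //.
  rewrite /E hx eqxx [r == _]eq_sym nr /=; congr (_ * _); apply: Up_loc => y hy.
  have hy' : #|y| = r.-1 by plia.
  by rewrite rv1 // /E hy' eqxx.
- move=> w wK H0; apply: (down (m := m)).
  + exact: ker_Vt (K_Dn wK).
  + move=> j hj; rewrite lam_nat; try plia.
    by rewrite pnatr_eq0 muln_eq0; apply/norP; split; apply/eqP; plia.
  + move=> x hx; rewrite tm in hx.
    have xL : x \in L by rewrite inL hx eqxx.
    by have := H0 x xL; rewrite /E hx eqxx.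
Qed.

Lemma lb_zero : (1 <= r)%N -> (2 * r <= n)%N -> (mult n r <= \rank (eigenspace A 0))%N.
Proof.
move=> h1 h2.
pose E (f : {set 'I_n} -> R) x := if #|x| == r then f x else 0.
have nr : (r.-1 == r) = false by apply/eqP; plia.
apply: (@rank_lb R n r r 0 E).
- move=> f x; rewrite /E; case: ifP => c1.
    exact: (KL_iter 0).
  by rewrite big1 // => y _; rewrite mulr0.
- move=> w wK; apply/EIG => //; split => x hx.
    rewrite mul0r (@Up_loc _ _ _ (fun _ => 0)) ?Up0 // => y hy.
    have hy' : #|y| = r.-1 by plia.
    by rewrite rv1 // /E hy' nr.
  rewrite mul0r (@Dn_loc _ _ _ (fw w)); first by apply: K_Dn wK _ _; plia.
  move=> y hy; have hy' : #|y| = r by plia.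
  by rewrite rv2 // /E hy' eqxx.
- move=> w wK H0 x hx.
  have xL : x \in L by rewrite inL hx eqxx orbT.
  by have := H0 x xL; rewrite /E hx eqxx.
Qed.

End Fin.

Lemma eq_from_bounds (I : finType) (a d : I -> nat) :
  (forall i, (d i <= a i)%N) -> (\sum_i a i <= \sum_i d i)%N -> forall i, a i = d i.
Proof.
move=> H S i; apply/eqP; rewrite eqn_leq H andbT.
move: S; rewrite (bigD1 i) //= [X in (_ <= X)%N](bigD1 i) //=.
have : (\sum_(j | j != i) d j <= \sum_(j | j != i) a j)%N by apply: leq_sum => j _.
lia.
Qed.

Lemma sumI r (F : ('I_r * bool + 'I_1)%type -> nat) :
  (\sum_i F i = \sum_(t < r) (F (inl (t, true)) + F (inl (t, false))) + F (inr ord0))%N.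
Proof.
rewrite big_sumType big_ord1 /=; congr (_ + _)%N.
rewrite (eq_bigr (fun t => \sum_(b : bool) F (inl (t, b)))); last by move=> t _; rewrite big_bool.
rewrite pair_big /=; apply: eq_bigr => -[t b] _ //.
Qed.

Lemma cardL n r : (1 <= r)%N -> #|layers n r| = ('C(n, r.-1) + 'C(n, r))%N.
Proof.
move=> h1.
have -> : layers n r = St n r.-1 :|: St n r by apply/setP => x; rewrite !inE.
rewrite cardsU !card_St.
have -> : St n r.-1 :&: St n r = set0.
  apply/setP => x; rewrite !inE; apply/negP => /andP[/eqP a /eqP b]; plia.
by rewrite cards0 subn0.
Qed.

Unset Implicit Arguments.

Theorem corollary1p11 (R : rcfType) (n r : nat)
  (hr1 : (1 <= r)%N) (hrn : (2 * r <= n)%N) :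
  let A := adjmx R n r in
  let gamma := fun t : nat => Num.sqrt (((r - t) * ((n - r).+1 - t))%N%:R : R) in
  (* (i) *)
  ((forall t : nat, (t <= r.-1)%N ->
      \rank (eigenspace A (gamma t)) = mult n t /\
      \rank (eigenspace A (- gamma t)) = mult n t) /\
   \rank (eigenspace A 0) = mult n r) /\
  (* (ii) *)
  (forall (t : nat) (lam : R), (t <= r.-1)%N -> (lam = gamma t \/ lam = - gamma t) ->
    forall v : 'rV[R]_#|layers n r|,
      ((v <= eigenspace A lam)%MS <->
         (inV r.-1 t (restr v r.-1) /\
          forall x : {set 'I_n}, #|x| = r ->
            restr v r x = lam^-1 *
              \sum_(y : {set 'I_n} | (#|y| == r.-1) && (y \subset x)) restr v r.-1 y)) /\
      ((v <= eigenspace A lam)%MS -> inV r t (restr v r))) /\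
  (* (iii) *)
  (forall v : 'rV[R]_#|layers n r|,
     (forall x : {set 'I_n}, restr v r.-1 x = 0) -> inV r r (restr v r) ->
     (v <= eigenspace A 0)%MS).
Proof.
move=> A gamma.
have e1 : r.-1.+1 = r := prednK hr1.
have gsq : forall t, (t <= r.-1)%N -> gamma t * gamma t = lam R n r.-1 t.
  move=> t ht; rewrite -expr2 sqr_sqrtr ?ler0n // lam_nat; try plia.
  by congr (_%:R); congr (_ * _)%N; plia.
have gpos : forall t, (t <= r.-1)%N -> 0 < gamma t.
  move=> t ht; rewrite sqrtr_gt0 ltr0n muln_gt0; apply/andP; split; plia.
have hla : forall t la, (t <= r.-1)%N -> (la = gamma t \/ la = - gamma t) ->
    la != 0 /\ la * la = lam R n r.-1 t.
  move=> t la ht [->|->]; split.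
  - by rewrite gt_eqF // gpos.
  - exact: gsq.
  - by rewrite oppr_eq0 gt_eqF // gpos.
  - by rewrite mulrNN gsq.
split; last split.
-
  pose a_ (i : ('I_r * bool + 'I_1)%type) : R :=
    match i with inl p => if p.2 then gamma p.1 else - gamma p.1 | inr _ => 0 end.
  pose d_ (i : ('I_r * bool + 'I_1)%type) : nat :=
    match i with inl p => mult n p.1 | inr _ => mult n r end.
  have ginj : forall t t' : 'I_r, gamma t = gamma t' -> t = t'.
    move=> t t' E; apply/val_inj/eqP; apply: contraT => ne.
    have h := ltn_ord t; have h' := ltn_ord t'.
    have ht : (t <= r.-1)%N by plia.
    have ht' : (t' <= r.-1)%N by plia.
    have := lam_dist R hr1 hrn ht ht' ne.
    by rewrite -(gsq _ ht) -(gsq _ ht') E eqxx.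
  have gp' : forall t : 'I_r, 0 < gamma t.
    by move=> t; apply: gpos; have := ltn_ord t; plia.
  have inj : {in predT &, injective a_}.
    move=> [[t b]|o] [[t' b']|o'] _ _ /=.
    - case: b; case: b' => /= E.
      + by rewrite (ginj _ _ E).
      + have := gp' t'; have := gp' t; rewrite E oppr_gt0 => h1 h2.
        by move: (lt_trans h1 h2); rewrite ltxx.
      + have := gp' t; have := gp' t'; rewrite -E oppr_gt0 => h1 h2.
        by move: (lt_trans h1 h2); rewrite ltxx.
      + by rewrite (ginj _ _ (oppr_inj E)).
    - case: b => /= E.
        by have := gp' t; rewrite E ltxx.
      by move/eqP: E; rewrite oppr_eq0 => /eqP E; have := gp' t; rewrite E ltxx.
    - case: b' => /= E.
        by have := gp' t'; rewrite -E ltxx.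
      by move/eqP: E; rewrite eq_sym oppr_eq0 => /eqP E; have := gp' t'; rewrite E ltxx.
    - by rewrite (ord1 o) (ord1 o').
  have LB : forall i, (d_ i <= \rank (eigenspace A (a_ i)))%N.
    move=> [[t b]|o] /=.
      have ht : (t <= r.-1)%N by have := ltn_ord t; plia.
      have hb : (if b then gamma t else - gamma t) = gamma t \/ (if b then gamma t else - gamma t) = - gamma t.
        by case: b; [left|right].
      have [nz sq] := hla t _ ht hb.
      exact: lb_gam.
    exact: lb_zero.
  have UB : (\sum_i \rank (eigenspace A (a_ i)) <= \sum_i d_ i)%N.
    have Hd := @mxdirect_sum_eigenspace _ _ _ A predT a_ inj.
    move: Hd; rewrite mxdirectE /= => /eqP <-.
    apply: leq_trans (rank_leq_col _) _.
    rewrite cardL // sumI /= -mult_total //.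
  have EQ := eq_from_bounds LB UB.
  split.
    move=> t ht; have tr : (t < r)%N by plia.
    exact: (conj (EQ (inl (Ordinal tr, true))) (EQ (inl (Ordinal tr, false)))).
  exact: (EQ (inr ord0)).
-
  move=> t la ht hl v; have [nz sq] := hla t la ht hl.
  split.
    split.
      move=> E; have [V Hq] := eig_p hr1 hrn ht nz sq E.
      split; first exact/inV_Vt.
      by move=> x hx; rewrite Hq // (UpS _ hr1 hx).
    case=> Hp Hq; apply: (mk_eig (t := t)) => //; first exact/inV_Vt.
    by move=> x hx; rewrite Hq // (UpS _ hr1 hx).
  move=> E; have [V Hq] := eig_p hr1 hrn ht nz sq E.
  apply/inV_Vt; have V2 := Vt_scale la^-1 (Vt_up V); rewrite e1 in V2.
  exact: Vt_ext V2 Hq.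
-
  move=> v Hp0 Hq; apply/EIG => //; split => x hx.
    by rewrite (@Up_loc _ _ _ (fun _ => 0)) ?Up0 ?mul0r // => y _; exact: Hp0.
  have V' : Vt r.-1.+1 r.-1.+1 (restr v r) by rewrite e1; exact/inV_Vt.
  by rewrite (Vt_top V') // mul0r.
Qed.
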